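(* Let $\mathcal{R}_0>0$ and let $\kappa:[0,1]\to[0,\infty)$ be a non-decreasing function with $\kappa(0)=0$. Consider the initial value problem \[ \frac{ds}{d\tau}=-\mathcal{R}_0\frac{1}{1+\kappa(i)}\,s\,i,\qquad \frac{di}{d\tau}=\Big(\mathcal{R}_0\frac{1}{1+\kappa(i)}\,s-1\Big)i, \] with initial conditions $s(0)=s_0\ge 0$, $i(0)=i_0>0$, $s_0+i_0=1$ (initial recovered fraction $r_0=0$), satisfying $s_0\mathcal{R}_0>1+\kappa(i_0)$, with non-negative solution $(s(\tau),i(\tau))$ converging to a disease-free equilibrium $(\bar s,0)$. Let $(s^0(\tau),i^0(\tau))$ be the solution of the same initial value problem with $\kappa\equiv0$ (the classical SIR model $ds/d\tau=-\mathcal{R}_0 s i$, $di/d\tau=(\mathcal{R}_0 s-1)i$), converging to the equilibrium $(\bar s^0,0)$. Then $\bar s\ge \bar s^0$.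
   Context: This is the non-dimensional ''feedback SIR'' (fSIR) model: $s$ and $i$ are the fractions of susceptible and infected individuals, $r=1-s-i$ the recovered fraction, $\tau$ is rescaled time, $\mathcal{R}_0$ the basic reproduction number, and $\kappa(i)$ the ''mitigation function'' with $\mathcal{R}(i)=\mathcal{R}_0/(1+\kappa(i))$. The equilibrium susceptible fraction is $\bar s=\lim_{\tau\to\infty}s(\tau)$. *)

(* Defs.v *)
From Stdlib Require Import Reals.
From Coquelicot Require Import Coquelicot.
Open Scope R_scope.

Definition is_fSIR_solution (R0 : R) (kappa : R -> R) (s i : R -> R) : Prop :=
  (forall t, 0 < t ->
     is_derive s t (- (R0 / (1 + kappa (i t))) * s t * i t) /\
     is_derive i t ((R0 / (1 + kappa (i t)) * s t - 1) * i t)) /\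
  filterlim s (at_right 0) (locally (s 0)) /\
  filterlim i (at_right 0) (locally (i 0)).

(* Main.v *)
Require Import Defs.
From Stdlib Require Import Reals Lra Psatz.
From Coquelicot Require Import Coquelicot.
Open Scope R_scope.


Lemma mono_pos (f : R -> R) a :
  (forall t, a < t -> exists d, is_derive f t d /\ 0 <= d) ->
  forall x y, a < x -> x <= y -> f x <= f y.
Proof.
  intros H x y Hx Hxy.
  destruct (Req_dec x y) as [->|Hne]; [lra|].
  destruct (MVT_gen f x y (Derive f)) as [c [Hc He]].
  - intros z Hz. rewrite Rmin_left in Hz by lra. rewrite Rmax_right in Hz by lra.
    destruct (H z ltac:(lra)) as [d [Hd _]].
    apply Derive_correct. exists d; exact Hd.
  - intros z Hz. rewrite Rmin_left in Hz by lra. rewrite Rmax_right in Hz by lra.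
    destruct (H z ltac:(lra)) as [d [Hd _]].
    apply continuity_pt_filterlim. apply (ex_derive_continuous f z). exists d; exact Hd.
  - rewrite Rmin_left in Hc by lra. rewrite Rmax_right in Hc by lra.
    destruct (H c ltac:(lra)) as [d [Hd Hd0]].
    rewrite (is_derive_unique f c d Hd) in He. nra.
Qed.

Lemma right_lim_le (f : R -> R) a b L :
  filterlim f (at_right a) (locally L) ->
  (forall x y, a < x -> x <= y -> f x <= f y) -> a < b -> L <= f b.
Proof.
  intros Hl Hm Hab.
  assert (H : Rbar_le L (f b)).
  { apply (filterlim_le (F := at_right a) f (fun _ => f b)).
    - exists (mkposreal (b - a) ltac:(lra)). intros y Hy Hay.
      apply Hm; auto. unfold ball in Hy; simpl in Hy. unfold AbsRing_ball, abs, minus, plus, opp in Hy; simpl in Hy.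
      apply Rabs_def2 in Hy. lra.
    - exact Hl.
    - apply filterlim_const. }
  exact H.
Qed.

Lemma lim_ge (f : R -> R) (L c M : R) :
  is_lim f p_infty L -> (forall t, M < t -> c <= f t) -> c <= L.
Proof.
  intros Hl Hc.
  assert (H : Rbar_le c L).
  { apply (filterlim_le (F := Rbar_locally p_infty) (fun _ => c) f).
    - exists M. intros; apply Hc; auto.
    - apply filterlim_const.
    - exact Hl. }
  exact H.
Qed.

Lemma lim_comb {T} (F : (T -> Prop) -> Prop) {FF : Filter F} (R0 : R) (u v : T -> R) a b :
  filterlim u F (locally a) -> filterlim v F (locally b) ->
  filterlim (fun t => u t * exp (- R0 * (u t + v t))) F (locally (a * exp (- R0 * (a + b)))).
Proof.
  intros Hu Hv.
  assert (Hw : filterlim (fun t => u t + v t) F (locally (a + b))).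
  { apply (filterlim_comp_2 u v Rplus Hu Hv). apply (filterlim_plus a b). }
  assert (He : filterlim (fun t => exp (- R0 * (u t + v t))) F (locally (exp (- R0 * (a + b))))).
  { apply (filterlim_comp _ _ _ (fun t => u t + v t) (fun x => exp (- R0 * x)) F _ _ Hw).
    apply (ex_derive_continuous (fun x => exp (- R0 * x))). auto_derive. auto. }
  apply (filterlim_comp_2 u _ Rmult Hu He). apply (filterlim_mult a _).
Qed.

Lemma is_derive_eq (f : R -> R) x a b : is_derive f x a -> a = b -> is_derive f x b.
Proof. intros H <-; exact H. Qed.

Lemma der_F (R0 : R) (u v : R -> R) t du dv :
  is_derive u t du -> is_derive v t dv ->
  is_derive (fun t => u t * exp (- R0 * (u t + v t))) t
    (du * exp (- R0 * (u t + v t)) + u t * (exp (- R0 * (u t + v t)) * (- R0 * (du + dv)))).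
Proof.
  intros Hu Hv.
  assert (Hw : is_derive (fun t => u t + v t) t (du + dv)) by (apply (is_derive_plus u v); auto).
  assert (Hs : is_derive (fun t => - R0 * (u t + v t)) t (- R0 * (du + dv))) by
    (apply (is_derive_scal (fun t => u t + v t)); auto).
  assert (He := is_derive_comp exp (fun t => - R0 * (u t + v t)) t _ _ (is_derive_exp _) Hs).
  assert (Hm := is_derive_mult u _ t _ _ Hu He (fun a b => Rmult_comm a b)).
  simpl in Hm. unfold mult, plus, scal in Hm; simpl in Hm. unfold mult in Hm; simpl in Hm.
  replace (du * exp (- R0 * (u t + v t)) + u t * (exp (- R0 * (u t + v t)) * (- R0 * (du + dv))))
   with (du * exp (- R0 * (u t + v t)) + u t * (- R0 * (du + dv) * exp (- R0 * (u t + v t)))) by ring.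
  exact Hm.
Qed.

Lemma h_mvt (R0 x y : R) : 0 < R0 -> x < y -> R0 * y <= 1 ->
  x * exp (- R0 * x) <= y * exp (- R0 * y) /\
  (R0 * y < 1 -> x * exp (- R0 * x) < y * exp (- R0 * y)).
Proof.
  intros HR Hxy Hy.
  destruct (MVT_gen (fun x => x * exp (- R0 * x)) x y (fun c => exp (- R0 * c) * (1 - R0 * c)))
    as [c [Hc He]].
  - intros z _. auto_derive; auto. ring.
  - intros z _. apply continuity_pt_filterlim.
    apply (ex_derive_continuous (fun x => x * exp (- R0 * x))). auto_derive; auto.
  - rewrite Rmin_left in Hc by lra. rewrite Rmax_right in Hc by lra.
    assert (E := exp_pos (- R0 * c)).
    assert (Hc1 : R0 * c <= R0 * y) by nra.
    split.
    + assert (0 <= exp (- R0 * c) * (1 - R0 * c) * (y - x)).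
      { apply Rmult_le_pos; [apply Rmult_le_pos|]; lra. }
      lra.
    + intros Hy'. assert (0 < exp (- R0 * c) * (1 - R0 * c) * (y - x)).
      { apply Rmult_lt_0_compat; [apply Rmult_lt_0_compat|]; lra. }
      lra.
Qed.

Theorem corollary1
  (R0 : R) (kappa : R -> R) (s0 i0 : R)
  (s i : R -> R) (sbar : R)
  (s' i' : R -> R) (sbar0 : R) :
  0 < R0 ->
  (forall x y, 0 <= x -> x <= y -> y <= 1 -> kappa x <= kappa y) ->
  (forall x, 0 <= x -> x <= 1 -> 0 <= kappa x) ->
  kappa 0 = 0 ->
  0 <= s0 -> 0 < i0 -> s0 + i0 = 1 ->
  s0 * R0 > 1 + kappa i0 ->
  (* the fSIR solution *)
  is_fSIR_solution R0 kappa s i ->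
  s 0 = s0 -> i 0 = i0 ->
  (forall t, 0 <= t -> 0 <= s t /\ 0 <= i t) ->
  is_lim s p_infty sbar -> is_lim i p_infty 0 ->
  (* the classical SIR solution (kappa = 0), same initial data *)
  is_fSIR_solution R0 (fun _ => 0) s' i' ->
  s' 0 = s0 -> i' 0 = i0 ->
  is_lim s' p_infty sbar0 -> is_lim i' p_infty 0 ->
  sbar >= sbar0.
Proof.
  intros HR0 Hkm Hkp Hk0 Hs0 Hi0 Hsum Hcond Hsol Es Ei Hpos Hls Hli Hsol' Es' Ei' Hls' Hli'.
  destruct Hsol as [Hd [Hrs Hri]]. destruct Hsol' as [Hd' [Hrs' Hri']].
  rewrite Es in Hrs. rewrite Ei in Hri. rewrite Es' in Hrs'. rewrite Ei' in Hri'.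
  assert (Hki0 : 0 <= kappa i0) by (apply Hkp; lra).
  assert (HsR : s0 * R0 > 1) by lra.
  assert (Hs0p : 0 < s0) by nra.
  set (c := s0 * exp (- R0)).
  assert (Hc : 0 < c) by (unfold c; apply Rmult_lt_0_compat; [lra| apply exp_pos]).
  assert (Hc' : s0 * exp (- R0 * (s0 + i0)) = c) by (unfold c; rewrite Hsum, Rmult_1_r; reflexivity).
  set (G := fun t => s' t * exp (- R0 * (s' t + i' t))).
  assert (HGd : forall t, 0 < t -> is_derive G t 0).
  { intros t Ht. destruct (Hd' t Ht) as [D1 D2].
    assert (H := der_F R0 s' i' t _ _ D1 D2).
    match type of H with is_derive _ _ ?v => replace 0 with v end. exact H.
    rewrite Rplus_0_r, Rdiv_1_r. ring. }
  assert (HGr : filterlim G (at_right 0) (locally c)).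
  { rewrite <- Hc'. apply lim_comb; auto. apply at_right_proper_filter. }
  assert (HGc : forall t, 0 < t -> G t = c).
  { intros t Ht. apply Rle_antisym.
    - assert (Hm : forall x y, 0 < x -> x <= y -> (fun t => - G t) x <= (fun t => - G t) y).
      { apply mono_pos. intros u Hu. exists (- 0). split. apply (is_derive_opp G). auto. lra. }
      assert (Hr : filterlim (fun t => - G t) (at_right 0) (locally (- c))).
      { apply (filterlim_comp _ _ _ G Ropp _ _ _ HGr). apply (ex_derive_continuous Ropp). auto_derive; auto. }
      assert (H := right_lim_le _ 0 t _ Hr Hm Ht). simpl in H. lra.
    - assert (Hm : forall x y, 0 < x -> x <= y -> G x <= G y).
      { apply mono_pos. intros u Hu. exists 0. split. auto. lra. }
      exact (right_lim_le _ 0 t _ HGr Hm Ht). }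
  assert (Hs'p : forall t, 0 < t -> 0 < s' t).
  { intros t Ht. assert (H := HGc t Ht). unfold G in H.
    assert (He := exp_pos (- R0 * (s' t + i' t))).
    destruct (Rlt_or_le 0 (s' t)); auto. nra. }
  assert (HGinf : filterlim G (Rbar_locally p_infty) (locally (sbar0 * exp (- R0 * (sbar0 + 0))))).
  { apply lim_comb; auto. apply Rbar_locally_filter. }
  assert (Hsb0 : sbar0 * exp (- R0 * sbar0) = c).
  { replace (sbar0 * exp (- R0 * sbar0)) with (sbar0 * exp (- R0 * (sbar0 + 0))) by (rewrite Rplus_0_r; auto).
    apply Rle_antisym.
    - assert (H : - c <= - (sbar0 * exp (- R0 * (sbar0 + 0)))).
      { apply (lim_ge (fun t => - G t) _ _ 0).
        + apply (filterlim_comp _ _ _ G Ropp _ _ _ HGinf). apply (ex_derive_continuous Ropp). auto_derive; auto.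
        + intros t Ht. rewrite HGc; auto. lra. }
      lra.
    - apply (lim_ge G _ _ 0). exact HGinf. intros t Ht. rewrite HGc; auto. lra. }
  assert (Hsb0p : 0 <= sbar0).
  { apply (lim_ge s' _ _ 0). exact Hls'. intros t Ht. left; auto. }
  assert (Hsb0le : R0 * sbar0 <= 1).
  { destruct (Rle_or_lt (R0 * sbar0) 1) as [H|H]; auto. exfalso.
    set (K := fun t => i' t ^ 2 * exp (2 * t)).
    assert (HKm : forall x y, 0 < x -> x <= y -> K x <= K y).
    { apply mono_pos. intros t Ht. destruct (Hd' t Ht) as [D1 D2].
      exists (2 * i' t * ((R0 / (1 + 0) * s' t - 1) * i' t) * exp (2 * t) + i' t ^ 2 * (2 * exp (2 * t))).
      split.
      - assert (HE : is_derive (fun t => exp (2 * t)) t (2 * exp (2 * t))) by (auto_derive; [auto | ring]).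
        assert (HP := is_derive_pow i' 2 t _ D2).
        assert (Hm := is_derive_mult _ _ t _ _ HP HE (fun a b => Rmult_comm a b)).
        unfold K. eapply is_derive_eq. exact Hm.
        simpl. unfold mult, plus; simpl. ring.
      - assert (He := exp_pos (2 * t)). assert (Hs := Hs'p t Ht).
        replace (2 * i' t * ((R0 / (1 + 0) * s' t - 1) * i' t) * exp (2 * t) + i' t ^ 2 * (2 * exp (2 * t)))
          with (2 * R0 * s' t * (i' t * i' t) * exp (2 * t)) by (rewrite Rplus_0_r, Rdiv_1_r; ring).
        apply Rmult_le_pos; [|lra]. apply Rmult_le_pos; [nra|]. nra. }
    assert (HKr : filterlim K (at_right 0) (locally (i0 ^ 2 * exp (2 * 0)))).
    { assert (Hid : filterlim (fun t : R => t) (at_right 0) (locally 0)).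
      { intros P [eps HP]. exists eps. intros y Hy _. apply HP. exact Hy. }
      assert (H1 : filterlim (fun t => i' t ^ 2) (at_right 0) (locally (i0 ^ 2))).
      { apply (filterlim_comp _ _ _ i' (fun x => x ^ 2) _ _ _ Hri').
        apply (ex_derive_continuous (fun x => x ^ 2)). auto_derive; auto. }
      assert (H2 : filterlim (fun t => exp (2 * t)) (at_right 0) (locally (exp (2 * 0)))).
      { apply (filterlim_comp _ _ _ (fun t => t) (fun x => exp (2 * x)) _ _ _ Hid).
        apply (ex_derive_continuous (fun x => exp (2 * x))). auto_derive; auto. }
      apply (filterlim_comp_2 _ _ Rmult H1 H2). apply (filterlim_mult (i0 ^ 2) _). }
    assert (HKp : forall t, 0 < t -> 0 < i' t ^ 2).
    { intros t Ht. assert (H1 := right_lim_le _ 0 t _ HKr HKm Ht).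
      rewrite Rmult_0_r, exp_0, Rmult_1_r in H1. unfold K in H1.
      assert (He := exp_pos (2 * t)). assert (0 < i0 ^ 2) by nra.
      destruct (Rlt_or_le 0 (i' t ^ 2)) as [Hq|Hq]; auto.
      assert (0 <= i' t ^ 2) by nra. nra. }
    assert (Heps : 0 < sbar0 - / R0).
    { assert (R0 * (sbar0 - / R0) > 0). { rewrite Rmult_minus_distr_l, Rinv_r by lra. lra. } nra. }
    apply is_lim_spec in Hls'. destruct (Hls' (mkposreal _ Heps)) as [M HM]. simpl in HM.
    assert (HQm : forall x y, Rmax M 0 < x -> x <= y -> (fun t => i' t ^ 2) x <= (fun t => i' t ^ 2) y).
    { apply mono_pos. intros t Ht.
      assert (Ht0 : 0 < t) by (assert (H0 := Rmax_r M 0); lra).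
      assert (HtM : M < t) by (assert (H0 := Rmax_l M 0); lra).
      destruct (Hd' t Ht0) as [D1 D2].
      exists (2 * i' t * ((R0 / (1 + 0) * s' t - 1) * i' t)). split.
      - eapply is_derive_eq. apply (is_derive_pow i' 2 t _ D2). simpl. ring.
      - assert (Hb := HM t HtM). apply Rabs_def2 in Hb.
        assert (Hsr : R0 * s' t > 1).
        { assert (R0 * (s' t - / R0) > 0) by (apply Rmult_lt_0_compat; lra).
          rewrite Rmult_minus_distr_l, Rinv_r in H0 by lra. lra. }
        rewrite Rplus_0_r, Rdiv_1_r.
        replace (2 * i' t * ((R0 * s' t - 1) * i' t)) with (2 * (R0 * s' t - 1) * (i' t * i' t)) by ring.
        apply Rmult_le_pos; nra. }
    set (T := Rmax M 0 + 1).
    assert (HT0 : 0 < T) by (unfold T; assert (H0 := Rmax_r M 0); lra).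
    assert (HTp := HKp T HT0).
    assert (Habs : 0 < Rabs (i' T)).
    { apply Rabs_pos_lt. intro Hz. rewrite Hz in HTp. simpl in HTp. lra. }
    apply is_lim_spec in Hli'. destruct (Hli' (mkposreal _ Habs)) as [M2 HM2]. simpl in HM2.
    set (t := Rmax M2 T + 1).
    assert (Ht1 : M2 < t) by (unfold t; assert (H0 := Rmax_l M2 T); lra).
    assert (Ht2 : T <= t) by (unfold t; assert (H0 := Rmax_r M2 T); lra).
    assert (Hq := HQm T t ltac:(unfold T; lra) Ht2). simpl in Hq.
    assert (Hb := HM2 t Ht1). rewrite Rminus_0_r in Hb.
    rewrite !Rmult_1_r in Hq.
    assert (Ha := Rsqr_abs (i' T)). assert (Hb2 := Rsqr_abs (i' t)). unfold Rsqr in Ha, Hb2.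
    assert (H0 := Rabs_pos (i' t)). nra. }
  assert (HD : forall t, 0 < t -> s t + i t <= 1).
  { intros t Ht.
    assert (Hm : forall x y, 0 < x -> x <= y -> (fun t => - (s t + i t)) x <= (fun t => - (s t + i t)) y).
    { apply mono_pos. intros u Hu. destruct (Hd u Hu) as [D1 D2]. exists (i u). split.
      - eapply is_derive_eq. apply (is_derive_opp (fun t => s t + i t)). apply (is_derive_plus s i); eauto.
        unfold opp, plus; simpl. ring.
      - apply (Hpos u); lra. }
    assert (Hr : filterlim (fun t => - (s t + i t)) (at_right 0) (locally (- (s0 + i0)))).
    { assert (Hw : filterlim (fun t => s t + i t) (at_right 0) (locally (s0 + i0))).
      { apply (filterlim_comp_2 s i Rplus Hrs Hri). apply (filterlim_plus s0 i0). }
      apply (filterlim_comp _ _ _ _ Ropp _ _ _ Hw). apply (ex_derive_continuous Ropp). auto_derive; auto. }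
    assert (H := right_lim_le _ 0 t _ Hr Hm Ht). simpl in H. lra. }
  set (F := fun t => s t * exp (- R0 * (s t + i t))).
  assert (HFm : forall x y, 0 < x -> x <= y -> F x <= F y).
  { apply mono_pos. intros t Ht. destruct (Hd t Ht) as [D1 D2].
    eexists. split. apply (der_F R0 s i t _ _ D1 D2).
    destruct (Hpos t ltac:(lra)) as [Hst Hit]. assert (Hit1 : i t <= 1) by (assert (H := HD t Ht); lra).
    assert (Hk := Hkp (i t) Hit Hit1). assert (E := exp_pos (- R0 * (s t + i t))).
    set (k := kappa (i t)) in *. set (e := exp (- R0 * (s t + i t))) in *.
    replace (- (R0 / (1 + k)) * s t * i t * e + s t * (e * (- R0 * (- (R0 / (1 + k)) * s t * i t + (R0 / (1 + k) * s t - 1) * i t))))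
      with (e * (s t * i t) * (R0 * k / (1 + k))) by (field; lra).
    apply Rmult_le_pos; [apply Rmult_le_pos; nra|]. apply Rdiv_le_0_compat; nra. }
  assert (HFr : filterlim F (at_right 0) (locally c)).
  { rewrite <- Hc'. apply lim_comb; auto. apply at_right_proper_filter. }
  assert (HFinf : filterlim F (Rbar_locally p_infty) (locally (sbar * exp (- R0 * (sbar + 0))))).
  { apply lim_comb; auto. apply Rbar_locally_filter. }
  assert (Hsb : c <= sbar * exp (- R0 * sbar)).
  { rewrite <- (Rplus_0_r sbar) at 2. apply (lim_ge F _ _ 0). exact HFinf.
    intros t Ht. exact (right_lim_le _ 0 t _ HFr HFm Ht). }
  assert (Hsbp : 0 <= sbar).
  { apply (lim_ge s _ _ 0). exact Hls. intros t Ht. apply (Hpos t); lra. }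
  destruct (Rle_or_lt sbar0 sbar) as [Hle|Hlt]; [lra|]. exfalso.
  set (m := (sbar + sbar0) / 2).
  destruct (h_mvt R0 sbar m HR0 ltac:(unfold m; lra) ltac:(unfold m; nra)) as [_ H1].
  destruct (h_mvt R0 m sbar0 HR0 ltac:(unfold m; lra) Hsb0le) as [H2 _].
  assert (H3 := H1 ltac:(unfold m; nra)). lra.
Qed.
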